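(* In the mechanism $\mathcal{M}_{sCA}$, let $\mathbf{t}$ be the true types and $(A_1,\dots,A_n)$ a feasible allocation maximizing $\sum_i t_i(A_i)$. Let $\mathbf{d}$ be a separated profile of single-minded declarations $(S_j,t_j(S_j))$. If $\sum_{j\in R_i(\mathbf{d},A_i)}d_j(S_j)<\frac12 t_i(A_i)$, then any utility-maximizing undominated declaration $d_i$ for agent $i$ (against $\mathbf{d}_{-i}$) is a single-minded declaration for some set $S_i$ with $d_i(S_i)\ge\frac12 t_i(A_i)$.
   Context: $s$-CA problem: $n$ agents, items $M$; feasible allocations consist of pairwise disjoint sets each of size at most $s$. Agent $i$ has private monotone valuation $t_i$, $t_i(\emptyset)=0$. Single-minded declaration $(S,x)$: value $x$ on supersets of $S$, $0$ otherwise. Mechanism $\mathcal{M}_{sCA}$: (1) replace each declaration by $(S_i,d_i(S_i))$ with $S_i\in\arg\max_S d_i(S)$ (ties to smaller sets); (2) greedily, in decreasing order of declared value, tentatively allocate sets of size at most $s$ disjoint from previously allocated ones, giving $T_1,\dots,T_n$; (3) for each $i$ with $T_i\ne\emptyset$, if $d_i(T_i)\le\sum_{j\ne i:\,S_j\cap T_i\neq\emptyset}d_j(S_j)$ set $T_i=\emptyset$; (4) allocate $T_1,\dots,T_n$ and charge each winner his critical price (infimum value he could declare for his set and still win it). Utility = true value minus payment. Undominated strategies are the single-minded declarations $(S,t_i(S))$. Notation: $R_i(\mathbf{d},T)=\{j\ne i:S_j\cap T\ne\emptyset\}$, $Q_i(\mathbf{d},T)=\{j\in R_i(\mathbf{d},T):d_j(S_j)<t_i(T)\}$;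 $\mathbf{d}$ is separated if $\sum_{j\in Q_i(\mathbf{d},S_i)}d_j(S_j)\le d_i(S_i)$ for all $i$. *)

(* Defs.v *)
From mathcomp Require Import all_boot all_order all_algebra.
From mathcomp Require Import boolp classical_sets reals.
From mathcomp Require Import finset.
Set Implicit Arguments.
Unset Strict Implicit.
Unset Printing Implicit Defensive.
Import Order.TTheory GRing.Theory Num.Theory.
Local Open Scope ring_scope.

Section SCA.
Variables (R : realType) (M : finType) (n s : nat).

(* A (single-minded) declaration (S, x): value x on supersets of S. *)
Definition decl := ({set M} * R)%type.
Definition profile := 'I_n -> decl.

Definition sm_val (D : decl) (T : {set M}) : R :=
  if D.1 \subset T then D.2 else 0.

(* Step (1): replace by (S_i, d_i(S_i)) with S_i an argmax, ties to smaller
   sets.  For a single-minded declaration (S,x) with x > 0 the unique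
   smallest maximizer is S; if x <= 0 the empty set maximizes. *)
Definition dset (d : profile) (j : 'I_n) : {set M} :=
  if 0 < (d j).2 then (d j).1 else set0.
Definition dval (d : profile) (j : 'I_n) : R := (d j).2.

Definition greedy_le (d : profile) (j k : 'I_n) : bool :=
  (dval d k < dval d j) || ((dval d k == dval d j) && (j <= k)%N).
Definition greedy_order (d : profile) : seq 'I_n :=
  sort (greedy_le d) (enum 'I_n).

Definition greedy_step (d : profile)
    (acc : {set M} * {ffun 'I_n -> {set M}}) (j : 'I_n) :=
  let S := dset d j in
  if (#|S| <= s)%N && [disjoint S & acc.1]
  then (acc.1 :|: S, [ffun k => if k == j then S else acc.2 k])
  else acc.
Definition tentative (d : profile) : {ffun 'I_n -> {set M}} :=
  (foldl (greedy_step d) (set0, [ffun => set0]) (greedy_order d)).2.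

Definition Rset (d : profile) (i : 'I_n) (T : {set M}) : {set 'I_n} :=
  [set j | (j != i) && (dset d j :&: T != set0)].

Definition final_alloc (d : profile) (i : 'I_n) : {set M} :=
  let T := tentative d i in
  if (T != set0) && (sm_val (d i) T <= \sum_(j in Rset d i T) dval d j)
  then set0 else T.

Definition upd (d : profile) (i : 'I_n) (D : decl) : profile :=
  fun j => if j == i then D else d j.

Definition critical_price (d : profile) (i : 'I_n) : R :=
  inf [set x : R | final_alloc (upd d i (final_alloc d i, x)) i
                   = final_alloc d i].
Definition payment (d : profile) (i : 'I_n) : R :=
  if final_alloc d i != set0 then critical_price d i else 0.

Definition utility (t : 'I_n -> {set M} -> R) (d : profile) (i : 'I_n) : R :=
  t i (final_alloc d i) - payment d i.

Definition valuation (v : {set M} -> R) : Prop :=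
  v set0 = 0 /\ forall A B : {set M}, A \subset B -> v A <= v B.

Definition feasible (A : 'I_n -> {set M}) : Prop :=
  (forall i, (#|A i| <= s)%N) /\
  (forall i j, i != j -> [disjoint A i & A j]).

Definition optimal_alloc (t : 'I_n -> {set M} -> R) (A : 'I_n -> {set M}) :=
  feasible A /\
  forall B, feasible B -> \sum_i t i (B i) <= \sum_i t i (A i).

Definition Qset (t : 'I_n -> {set M} -> R) (d : profile) (i : 'I_n)
    (T : {set M}) : {set 'I_n} :=
  [set j in Rset d i T | dval d j < t i T].
Definition separated (t : 'I_n -> {set M} -> R) (d : profile) : Prop :=
  forall i, \sum_(j in Qset t d i (dset d i)) dval d j <= dval d i.

Definition undominated_decl (t : 'I_n -> {set M} -> R) (i : 'I_n)
    (S : {set M}) : decl := (S, t i S).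

Definition best_undominated (t : 'I_n -> {set M} -> R) (d : profile)
    (i : 'I_n) (S : {set M}) : Prop :=
  forall S' : {set M},
    utility t (upd d i (undominated_decl t i S')) i
      <= utility t (upd d i (undominated_decl t i S)) i.

End SCA.

(* Main.v *)
Require Import Defs.
From mathcomp Require Import all_boot all_order all_algebra.
From mathcomp Require Import boolp classical_sets reals.
From mathcomp Require Import finset.
From mathcomp Require Import lra.
Import Order.TTheory GRing.Theory Num.Theory.
Local Open Scope ring_scope.

Section Aux.
Variables (R : realType) (M : finType) (n s : nat).
Implicit Types (d : profile R M n).

Lemma tent_cases d k : tentative s d k = set0 \/ tentative s d k = dset d k.
Proof.
rewrite /tentative.
have : forall (acc : {set M} * {ffun 'I_n -> {set M}}),
   (forall k, acc.2 k = set0 \/ acc.2 k = dset d k) ->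
   forall l, forall k, (foldl (greedy_step s d) acc l).2 k = set0 \/
                       (foldl (greedy_step s d) acc l).2 k = dset d k.
  move=> acc H l; elim: l acc H => [|j l IH] acc H //= k0.
  apply: IH => k1; rewrite /greedy_step.
  case: ifP => _ //=; rewrite ffunE; case: eqP => [->|_]; by [right|].
move=> /(_ (set0, [ffun => set0])) H; apply: H => k1 /=; rewrite ffunE; by left.
Qed.

Lemma final_cases d k : final_alloc s d k = set0 \/ final_alloc s d k = dset d k.
Proof.
rewrite /final_alloc; case: ifP => _; first by left.
exact: tent_cases.
Qed.

Lemma dset_upd_i d i T x : dset (upd d i (T, x)) i = if 0 < x then T else set0.
Proof. by rewrite /dset /upd eqxx. Qed.

Lemma final_pos d i T x : T != set0 -> final_alloc s (upd d i (T, x)) i = T -> 0 < x.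
Proof.
move=> T0 E; case: (final_cases (upd d i (T, x)) i); rewrite E.
  by move=> E'; rewrite E' eqxx in T0.
rewrite dset_upd_i; case: ifP => // _ E'; by rewrite E' eqxx in T0.
Qed.

Lemma upd_upd d i D D' : upd (upd d i D) i D' = upd d i D'.
Proof. apply: funext => j; rewrite /upd; by case: (j == i). Qed.

Lemma upd_same d i : upd d i (d i) = d.
Proof. apply: funext => j; rewrite /upd; by case: eqP => [->|]. Qed.

Lemma Rset_upd d i D T : Rset (upd d i D) i T = Rset d i T.
Proof.
apply/setP => j; rewrite !inE /dset /upd; by case: (j == i).
Qed.

Lemma sum_upd d i D T :
  \sum_(j in Rset (upd d i D) i T) dval (upd d i D) j =
  \sum_(j in Rset d i T) dval d j.
Proof.
rewrite Rset_upd; apply: eq_bigr => j; rewrite inE => /andP[/negbTE ji _].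
by rewrite /dval /upd ji.
Qed.

Lemma greedy_le_trans d : transitive (greedy_le d).
Proof.
move=> k j l; rewrite /greedy_le.
move=> /orP[h1|/andP[/eqP e1 h1]] /orP[h2|/andP[/eqP e2 h2]]; apply/orP.
- left; exact: lt_trans h2 h1.
- by left; rewrite e2.
- by left; rewrite -e1.
- by right; rewrite e2 e1 eqxx (leq_trans h1 h2).
Qed.

Lemma greedy_le_total d : total (greedy_le d).
Proof.
move=> j k; rewrite /greedy_le.
have [h|h|h] := ltgtP (dval d j) (dval d k).
- by [].
- by [].
- by rewrite /= leq_total.
Qed.

Lemma tent_win d i T x :
  d i = (T, x) -> 0 < x -> (#|T| <= s)%N ->
  (forall j, j != i -> 0 <= dval d j) ->
  \sum_(j in Rset d i T) dval d j < x ->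
  tentative s d i = T.
Proof.
move=> di x0 Ts nn hsum.
have dsi : dset d i = T by rewrite /dset di /= x0.
have dvi : dval d i = x by rewrite /dval di.
have le_sum : forall j, j \in Rset d i T -> dval d j < x.
  move=> j jR; apply: le_lt_trans hsum.
  rewrite (bigD1 j) //= lerDl; apply: sumr_ge0 => k /andP[kR _].
  by apply: nn; move: kR; rewrite inE => /andP[].
rewrite /tentative.
have iin : i \in greedy_order d by rewrite /greedy_order mem_sort mem_enum.
have un : uniq (greedy_order d) by rewrite /greedy_order sort_uniq enum_uniq.
have srt : pairwise (greedy_le d) (greedy_order d).
  by rewrite -sorted_pairwise ?sort_sorted //; [apply: greedy_le_total | apply: greedy_le_trans].
move: un srt; case/splitPr: iin => s1 s2.
rewrite cat_uniq /= => un; move: un => /and3P[_ /norP[/negP ni1 _] /andP[ni2 _]].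
rewrite pairwise_cat allrel_consr => /and3P[/andP[all1 _] _ _].
rewrite foldl_cat /=.
have disj : forall l (acc : {set M} * {ffun 'I_n -> {set M}}), all (greedy_le d ^~ i) l -> i \notin l ->
   [disjoint acc.1 & T] -> [disjoint (foldl (greedy_step s d) acc l).1 & T].
  elim=> [|j l IH] acc //= /andP[hj hl]; rewrite inE negb_or => /andP[ji nil] da.
  apply: IH => //; rewrite /greedy_step; case: ifP => //= _.
  rewrite disjoints_subset subUset -disjoints_subset da /= -disjoints_subset.
  apply/negPn/negP => nd.
  have jR : j \in Rset d i T.
    rewrite inE eq_sym ji /=; apply/set0Pn; move/pred0Pn: nd => [y /andP[y1 y2]].
    by exists y; rewrite inE; apply/andP; split.
  move: (le_sum j jR) hj; rewrite /greedy_le dvi => lt.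
  by rewrite (lt_gtF lt) /= => /andP[/eqP e _]; move: lt; rewrite e ltxx.
set acc1 := foldl _ _ s1.
have da1 : [disjoint acc1.1 & T].
  apply: disj => //; last by rewrite disjoints_subset sub0set.
  by apply/negP.
have step : (greedy_step s d acc1 i).2 i = T.
  rewrite /greedy_step dsi Ts disjoint_sym da1 /= ffunE eqxx //.
have keep : forall l (acc : {set M} * {ffun 'I_n -> {set M}}), i \notin l ->
   (foldl (greedy_step s d) acc l).2 i = acc.2 i.
  elim=> [|j l IH] acc //=; rewrite inE negb_or => /andP[ji nil].
  rewrite IH // /greedy_step; case: ifP => //= _; rewrite ffunE.
  by rewrite (negbTE ji).
by rewrite keep.
Qed.

End Aux.

Section Aux2.
Variables (R : realType) (M : finType) (n s : nat).

Lemma final_win (d : profile R M n) i T x :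
  0 < x -> T != set0 -> (#|T| <= s)%N ->
  (forall j, j != i -> 0 <= dval d j) ->
  \sum_(j in Rset d i T) dval d j < x ->
  final_alloc s (upd d i (T, x)) i = T.
Proof.
move=> x0 T0 Ts nn hs.
have tw : tentative s (upd d i (T, x)) i = T.
  apply: (@tent_win R M n s _ i T x) => //.
  - by rewrite /upd eqxx.
  - by move=> j ji; rewrite /dval /upd (negbTE ji); apply: nn.
  - by rewrite sum_upd.
rewrite /final_alloc tw T0 /= /sm_val /upd eqxx /= subxx -/(upd d i (T, x)) sum_upd.
by rewrite leNgt hs.
Qed.

End Aux2.

Theorem proposition4p5 (R : realType) (M : finType) (n s : nat)
    (t : 'I_n -> {set M} -> R) (A : 'I_n -> {set M})
    (S : 'I_n -> {set M}) (i : 'I_n) :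
  (forall j, valuation (t j)) ->
  optimal_alloc s t A ->
  let d : profile R M n := fun j => (S j, t j (S j)) in
  separated t d ->
  \sum_(j in Rset d i (A i)) dval d j < t i (A i) / 2 ->
  forall Si : {set M}, best_undominated s t d i Si ->
    let di := undominated_decl t i Si in
    t i (A i) / 2 <= sm_val di Si.
Proof.
move=> hval hopt d _ hlt Si hbest.
rewrite /undominated_decl /sm_val /= subxx.
set v := t i (A i) in hlt *.
set sig := \sum_(j in Rset d i (A i)) dval d j in hlt.
have nn : forall j, 0 <= dval d j.
  move=> j; rewrite /dval /=; case: (hval j) => h0 hm.
  by rewrite -h0; apply: hm; apply: sub0set.
have sig0 : 0 <= sig by apply: sumr_ge0 => j _.
have v0 : 0 < v.
  lra.
have A0 : A i != set0.
  apply/eqP => e; move: v0; rewrite /v e; case: (hval i) => -> _; by rewrite ltxx.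
have As : (#|A i| <= s)%N by case: hopt => [[h _] _]; apply: h.
have nn' : forall j, j != i -> 0 <= dval d j by move=> j _; apply: nn.
set e1 := upd d i (A i, v).
have sv : sig < v by lra.
have F1 : final_alloc s e1 i = A i by apply: final_win => //; exact: sv.
have u1 : v / 2 < utility s t e1 i.
  rewrite /utility /payment F1 A0 /critical_price F1.
  set E := (X in inf X).
  pose y0 := (sig + v / 2) / 2.
  have Ey0 : E y0 by rewrite /E /= /e1 upd_upd; apply: final_win => //; rewrite /y0; [lra | have : sig < (sig + v / 2) / 2 by lra]; exact.
  have lb : has_lbound E.
    exists 0 => y; rewrite /E /= /e1 upd_upd => /final_pos h.
    by apply/ltW/h.
  have := ge_inf lb Ey0; rewrite /y0 -/v => h; lra.
have := hbest (A i); rewrite /undominated_decl -/v -/e1 => hb.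
set e2 := upd d i (Si, t i Si) in hb.
have [F0|F0] := eqVneq (final_alloc s e2 i) set0.
  move: hb; rewrite [utility s t e2 i]/utility /payment F0 eqxx /=; case: (hval i) => -> _.
  move=> hb; lra.
have FS : final_alloc s e2 i = Si.
  case: (@final_cases _ _ _ s e2 i) => h; first by rewrite h eqxx in F0.
  move: h; rewrite /e2 dset_upd_i; case: ifP => // _ h.
  by rewrite -/e2 h eqxx in F0.
move: hb; rewrite [utility s t e2 i]/utility /payment F0 /critical_price FS.
set E := (X in inf X).
have E1 : E (t i Si) by rewrite /E /= /e2 upd_upd -/e2 FS.
have lb : lbound E 0.
  move=> y; rewrite /E /= /e2 upd_upd => /final_pos h.
  apply/ltW/h; by rewrite -FS.
have := lb_le_inf (ex_intro _ _ E1) lb => h hb; lra.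
Qed.
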